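(* For every integer $m\geq 3$, the graph $C[m]\times P[2]$ is antimagic.
   Context: All graphs are finite, undirected and simple. $C[m]$ denotes the cycle on $m$ vertices and $P[2]$ the path on $2$ vertices (a single edge). The Cartesian product $G_1\times G_2$ of graphs $G_1=(V_1,E_1)$ and $G_2=(V_2,E_2)$ has vertex set $V_1\times V_2$, with $(u_1,u_2)$ adjacent to $(v_1,v_2)$ iff either $u_1=v_1$ and $u_2v_2\in E_2$, or $u_2=v_2$ and $u_1v_1\in E_1$. An antimagic labeling of a graph with $m'$ edges is a bijection $f$ from its edge set to $\{1,\ldots,m'\}$ such that the vertex sums $f^+(v)=\sum_{e\ni v} f(e)$ (sum over edges incident with $v$) are pairwise distinct over all vertices $v$. A graph is antimagic if it admits an antimagic labeling. *)

(* Defs.v *)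
From mathcomp Require Import all_boot all_order.
Set Implicit Arguments. Unset Strict Implicit. Unset Printing Implicit Defensive.

(* A finite simple graph is a symmetric irreflexive relation [e] on a finType. *)

Definition edges (T : finType) (e : rel T) : {set {set T}} :=
  [set A : {set T} | [exists x : T, exists y : T, e x y && (A == [set x; y])]].

Definition vsum (T : finType) (e : rel T) (f : {set T} -> nat) (v : T) : nat :=
  \sum_(A in edges e | v \in A) f A.

Definition edge_labeling (T : finType) (e : rel T) (f : {set T} -> nat) : Prop :=
  {in edges e &, injective f} /\
  (forall A, A \in edges e -> 1 <= f A <= #|edges e|).

Definition antimagic_labeling (T : finType) (e : rel T) (f : {set T} -> nat) : Prop :=
  edge_labeling e f /\ injective (vsum e f).

Definition antimagic (T : finType) (e : rel T) : Prop :=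
  exists f : {set T} -> nat, antimagic_labeling e f.

Definition cycle_rel (m : nat) : rel 'I_m :=
  fun i j => (val j == (val i).+1 %% m) || (val i == (val j).+1 %% m).

Arguments cycle_rel : clear implicits.
Definition path2_rel : rel 'I_2 := fun i j => i != j.

Definition cart_prod (T1 T2 : finType) (e1 : rel T1) (e2 : rel T2) : rel (T1 * T2) :=
  fun x y => ((x.1 == y.1) && e2 x.2 y.2) || ((x.2 == y.2) && e1 x.1 y.1).

(* Main.v *)
Require Import Defs.
From mathcomp Require Import all_boot all_order zify.
Set Implicit Arguments. Unset Strict Implicit. Unset Printing Implicit Defensive.

Notation V n := ('I_n.+1 * 'I_2)%type.
Definition succ n (i : 'I_n.+1) : 'I_n.+1 := inord (if nat_of_ord i == n then 0 else (nat_of_ord i).+1).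
Definition pred' n (i : 'I_n.+1) : 'I_n.+1 := inord (if nat_of_ord i == 0 then n else (nat_of_ord i).-1).

Lemma val_succ n (i : 'I_n.+1) : nat_of_ord (succ i) = (if nat_of_ord i == n then 0 else (nat_of_ord i).+1).
Proof. rewrite /succ inordK //; case: ifP => /eqP H //; have := ltn_ord i; lia. Qed.
Lemma val_pred n (i : 'I_n.+1) : nat_of_ord (pred' i) = (if nat_of_ord i == 0 then n else (nat_of_ord i).-1).
Proof. rewrite /pred' inordK //; case: ifP => /eqP H //; have := ltn_ord i; lia. Qed.
Lemma succ_mod n (i : 'I_n.+1) : (nat_of_ord i).+1 %% n.+1 = nat_of_ord (succ i).
Proof.
rewrite val_succ; case: eqP => [->|ne]; first by rewrite modnn.
rewrite modn_small //; have := ltn_ord i; lia.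
Qed.
Lemma succK n (i : 'I_n.+1) : pred' (succ i) = i.
Proof. apply: val_inj; rewrite /= val_pred val_succ; have := ltn_ord i; case: eqP; case: eqP => //=; lia. Qed.
Lemma predK n (i : 'I_n.+1) : succ (pred' i) = i.
Proof. apply: val_inj; rewrite /= val_succ val_pred; have := ltn_ord i; case: eqP; case: eqP => //=; lia. Qed.
Lemma succ_neq n (i : 'I_n.+1) : 0 < n -> succ i != i.
Proof. move=> n0; apply/eqP => /(congr1 val); rewrite /= val_succ; have := ltn_ord i; case: eqP => /=; lia. Qed.
Lemma succ2_neq n (i : 'I_n.+1) : 1 < n -> succ (succ i) != i.
Proof. move=> n0; apply/eqP => /(congr1 val); rewrite /= !val_succ; have := ltn_ord i; case: eqP; case: eqP => /=; lia. Qed.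

Notation K n := (('I_2 * 'I_n.+1) + 'I_n.+1)%type.
Definition E n (k : K n) : {set V n} :=
  match k with
  | inl (b, i) => [set (i, b); (succ i, b)]
  | inr i => [set (i, ord0); (i, ord_max)]
  end.
Definition lab n (k : K n) : nat :=
  match k with
  | inl (b, i) => 1 + i + 2 * n.+1 * b
  | inr i => if nat_of_ord i == 0 then n.+2 else 2 * n.+1 + 1 - i
  end.
Definition G n := cart_prod (cycle_rel n.+1) path2_rel.
Arguments G : clear implicits.

Lemma ord2E (b : 'I_2) : b = ord0 \/ b = ord_max.
Proof. by case: b => [[|[|]]] // Hb; [left|right]; apply/eqP. Qed.

Lemma edgesE n : edges (G n) = (@E n) @: setT.
Proof.
apply/setP => A; rewrite inE; apply/existsP/imsetP.
- case=> [[i b]] /existsP [[j c]] /andP [exy /eqP ->].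
  move: exy; rewrite /G /cart_prod /= /path2_rel /cycle_rel /=.
  case/orP => /andP [/eqP E1 H].
  + subst j; exists (inr i) => //=.
    case: (ord2E b) H => ->; case: (ord2E c) => -> //= _; by rewrite setUC.
  + subst c; rewrite !succ_mod in H; case/orP: H => /eqP H.
    * exists (inl (b, i)) => //=; congr [set _; (_, _)]; exact: val_inj.
    * exists (inl (b, j)) => //=; rewrite setUC; congr [set _; (_, _)]; apply: val_inj; exact: H.
- case=> k _ ->; case: k => [[b i]|i].
  + exists (i, b); apply/existsP; exists (succ i, b); rewrite eqxx andbT.
    by rewrite /G /cart_prod /= eqxx /cycle_rel /= succ_mod eqxx orbT.
  + exists (i, ord0); apply/existsP; exists (i, ord_max); rewrite eqxx andbT.
    by rewrite /G /cart_prod /= eqxx.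
Qed.

Lemma succ_eq n (a b : 'I_n.+1) : (succ a == succ b) = (a == b).
Proof. exact: (inj_eq (can_inj (@succK n))). Qed.

Lemma E_inj n : 1 < n -> injective (@E n).
Proof.
move=> n1 [[b i]|i] [[c j]|j] /setP H.
- move: (H (i,b)) (H (succ i, b)); rewrite /E !in_set2 !xpair_eqE !eqxx /= !andbT.
  case: (eqVneq b c) => [<-|bc]; last by rewrite !andbF.
  rewrite !andbT succ_eq.
  case: (eqVneq i j) => [->//|ij] /=.
  move=> /esym/eqP -> /esym; rewrite succ_eq (negbTE (succ_neq _ (ltnW n1))).
  by rewrite (negbTE (succ2_neq _ n1)).
- move: (H (i,b)) (H (succ i, b)); rewrite /E !in_set2 !xpair_eqE !eqxx /= !andbT.
  case: (eqVneq i j) => [<-|ij] /=; last by case.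
  by rewrite (negbTE (succ_neq _ (ltnW n1))).
- move: (H (j,c)) (H (succ j, c)); rewrite /E !in_set2 !xpair_eqE !eqxx /= !andbT.
  case: (eqVneq j i) => [<-|ij] /=; last by case.
  by rewrite (negbTE (succ_neq _ (ltnW n1))).
- move: (H (i,ord0)); rewrite /E !in_set2 !xpair_eqE !eqxx /=.
  by case: (eqVneq i j) => [->|].
Qed.

Lemma lab_inj n : injective (@lab n).
Proof.
move=> [[b i]|i] [[c j]|j]; rewrite /lab;
  have := ltn_ord i; have := ltn_ord j; 
  (try case: (ord2E b) => ->); (try case: (ord2E c) => ->) => /=;
  (try case: eqP); (try case: eqP); move=> *;
  try (congr inl; congr pair; apply: val_inj => /=; lia);
  try (congr inr; apply: val_inj => /=; lia); lia.
Qed.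

Lemma lab_bound n (k : K n) : 1 <= lab k <= 3 * n.+1.
Proof.
case: k => [[b i]|i]; rewrite /lab; have := ltn_ord i;
  (try case: (ord2E b) => ->) => /=; (try case: eqP); lia.
Qed.

Lemma card_K n : #|{: K n}| = 3 * n.+1.
Proof. rewrite card_sum card_prod !card_ord; lia. Qed.

Definition f n (A : {set V n}) : nat :=
  if [pick k | E k == A] is Some k then lab k else 0.

Lemma fE n (k : K n) : 1 < n -> f (E k) = lab k.
Proof.
move=> n1; rewrite /f; case: pickP => [k' /eqP /(E_inj n1) -> //|/(_ k)].
by rewrite eqxx.
Qed.

Lemma vsumE n (i : 'I_n.+1) (b : 'I_2) : 1 < n ->
  vsum (G n) (@f n) (i, b) = 2 * n.+1 + 2 + i + 4 * n.+1 * b.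
Proof.
move=> n1; rewrite /vsum edgesE big_mkcondr big_imset; last by move=> x y _ _; apply: E_inj.
rewrite (eq_bigl predT); last by move=> k; rewrite /= inE.
under eq_bigr => k _ do rewrite fE //.
rewrite (bigD1 (inl (b, i))) //= (bigD1 (inl (b, pred' i))) /=; last first.
  apply/eqP => -[] /(congr1 (@succ n)); rewrite predK.
  by move/eqP; rewrite eq_sym (negbTE (succ_neq _ (ltnW n1))).
rewrite (bigD1 (inr i)) //= big1; last first.
  move=> [[c j]|j] /andP [/andP [H1 H2] H3]; rewrite !in_set2 !xpair_eqE.
  + case: (eqVneq c b) => [ecb|] /=; last by rewrite !andbF.
    subst c; rewrite !andbT.
    case: (eqVneq i j) => [eij|nij]; first by move: H1; rewrite eij eqxx.
    case: (eqVneq i (succ j)) => // eij.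
    by move: H2; rewrite eij succK eqxx.
  + case: (eqVneq i j) => [eij|nij]; first by move: H3; rewrite eij eqxx.
    by rewrite !andFb.
rewrite !in_set2 !xpair_eqE !eqxx /= predK eqxx /= orbT /=.
have -> : ((b == ord0) || (b == ord_max)) = true by case: (ord2E b) => ->; rewrite eqxx ?orbT.
rewrite /= val_pred; have := ltn_ord i; case: (ord2E b) => -> /=; case: eqP => /=; lia.
Qed.

Theorem lemma4p2 (m : nat) (hm : 3 <= m) :
  antimagic (cart_prod (cycle_rel m) path2_rel).
Proof.
case: m hm => [//|n] hm; have n1 : 1 < n by [].
exists (@f n); split; first split.
- move=> A B; rewrite -/(G n) edgesE => /imsetP [k _ ->] /imsetP [k' _ ->].
  by rewrite !fE // => /lab_inj ->.
- move=> A; rewrite -/(G n) edgesE => /imsetP [k _ ->].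
  rewrite fE // card_imset; last exact: E_inj.
  by rewrite cardsT card_K lab_bound.
- move=> [i b] [j c]; rewrite -/(G n) !vsumE //.
  have := ltn_ord i; have := ltn_ord j.
  case: (ord2E b) => ->; case: (ord2E c) => -> /= ? ? H; congr pair; apply: val_inj => /=; lia.
Qed.
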